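(* Let $A$ be an associative commutative algebra with unit over a field $K$ of characteristic different from $2$ and $3$, let $\partial\in\operatorname{Der}(A)$, and suppose that $a\partial\ne0$ for every nonzero $a\in A$. Let $A\partial=\{a\partial : a\in A\}$, a Lie algebra of derivations with $[a\partial,b\partial]=(a\partial(b)-b\partial(a))\partial$. For $\chi\in A^*$ define $\Phi(\chi):A\partial\times A\partial\to K$ by $\Phi(\chi)(a\partial,b\partial)=\chi(ab)$. Then each $\Phi(\chi)$ is a commutative $2$-cocycle on $A\partial$, and $\chi\mapsto\Phi(\chi)$ is an injective linear map $A^*\to Z^2_{comm}(A\partial)$.
   Context: $Z^2_{comm}(L)$ is the space of symmetric bilinear forms $\varphi:L\times L\to K$ with $\varphi([x,y],z)+\varphi([z,x],y)+\varphi([y,z],x)=0$ for all $x,y,z\in L$. *)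

(* Defs.v *)
From HB Require Import structures.
From mathcomp Require Import all_boot all_order all_algebra.
From Stdlib Require Import ClassicalEpsilon.
Set Implicit Arguments. Unset Strict Implicit. Unset Printing Implicit Defensive.
Import GRing.Theory.
Local Open Scope ring_scope.

Definition lin_fun (K : fieldType) (A : lmodType K) (f : A -> A) : Prop :=
  forall (c : K) (u v : A), f (c *: u + v) = c *: f u + f v.

Definition lin_form (K : fieldType) (A : lmodType K) (chi : A -> K) : Prop :=
  forall (c : K) (u v : A), chi (c *: u + v) = c * chi u + chi v.

Definition is_derivation (K : fieldType) (A : comAlgType K) (d : A -> A) : Prop :=
  lin_fun d /\ forall a b : A, d (a * b) = a * d b + d a * b.

Definition mulder (K : fieldType) (A : comAlgType K) (d : A -> A) (a : A) : A -> A :=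
  fun x => a * d x.

Definition inAd (K : fieldType) (A : comAlgType K) (d : A -> A) (D : A -> A) : Prop :=
  exists a : A, D = mulder d a.

Definition opbr (K : fieldType) (A : comAlgType K) (D1 D2 : A -> A) : A -> A :=
  fun x => D1 (D2 x) - D2 (D1 x).

Definition opadd (K : fieldType) (A : comAlgType K) (D1 D2 : A -> A) : A -> A :=
  fun x => D1 x + D2 x.
Definition opscale (K : fieldType) (A : comAlgType K) (c : K) (D : A -> A) : A -> A :=
  fun x => c *: D x.

Definition Z2comm (K : fieldType) (A : comAlgType K) (d : A -> A)
    (phi : (A -> A) -> (A -> A) -> K) : Prop :=
  (forall x y, inAd d x -> inAd d y -> phi x y = phi y x) /\
  (forall (c : K) x y z, inAd d x -> inAd d y -> inAd d z ->
      phi (opadd (opscale c x) y) z = c * phi x z + phi y z) /\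
  (forall (c : K) x y z, inAd d x -> inAd d y -> inAd d z ->
      phi z (opadd (opscale c x) y) = c * phi z x + phi z y) /\
  (forall x y z, inAd d x -> inAd d y -> inAd d z ->
      phi (opbr x y) z + phi (opbr z x) y + phi (opbr y z) x = 0).

(* The coefficient a of an element D = a∂ of A∂ (well defined when a |-> a∂ is injective). *)
Definition coefAd (K : fieldType) (A : comAlgType K) (d : A -> A) (D : A -> A) : A :=
  epsilon (inhabits (0 : A)) (fun a : A => D = mulder d a).

Definition Phi (K : fieldType) (A : comAlgType K) (d : A -> A) (chi : A -> K)
    (D1 D2 : A -> A) : K :=
  chi (coefAd d D1 * coefAd d D2).

(* Main.v *)
Require Import Defs.
From HB Require Import structures.
From mathcomp Require Import all_boot all_order all_algebra.
From Stdlib Require Import ClassicalEpsilon FunctionalExtensionality.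
From mathcomp Require Import ring.
Import GRing.Theory.
Local Open Scope ring_scope.

Lemma mulder_inj (K : fieldType) (A : comAlgType K) (d : A -> A) :
  (forall a : A, a != 0 -> mulder d a <> (fun _ => 0)) ->
  forall a b, mulder d a = mulder d b -> a = b.
Proof.
move=> H a b E; apply/eqP; rewrite -subr_eq0; apply/negPn/negP => /H; apply.
apply: functional_extensionality => x.
have := congr1 (fun f => f x) E; rewrite /mulder /= mulrBl => ->.
by rewrite subrr.
Qed.

Lemma coefAd_mulder (K : fieldType) (A : comAlgType K) (d : A -> A) :
  (forall a : A, a != 0 -> mulder d a <> (fun _ => 0)) ->
  forall a, coefAd d (mulder d a) = a.
Proof.
move=> H a; rewrite /coefAd.
have := epsilon_spec (inhabits (0 : A)) (fun b : A => mulder d a = mulder d b)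
  (ex_intro _ a erefl).
by move/(@mulder_inj _ _ _ H _ _) => <-.
Qed.

Lemma cyc (R : comRingType) (a b e da db de : R) :
 (a * db - b * da) * e + (e * da - a * de) * b + (b * de - e * db) * a = 0.
Proof. ring. Qed.
Lemma brk (R : comRingType) (a b db da dx ddx : R) :
  a * (b * ddx + db * dx) - b * (a * ddx + da * dx) = (a * db - b * da) * dx.
Proof. ring. Qed.


Lemma Ebr (K : fieldType) (A : comAlgType K) (d : A -> A)
  (Hl : forall u v : A, d (u * v) = u * d v + d u * v) (a b : A) :
  opbr (mulder d a) (mulder d b) = mulder d (a * d b - b * d a).
Proof.
apply: functional_extensionality => x.
rewrite /opbr /mulder !Hl; exact: brk.
Qed.

Lemma Elin (K : fieldType) (A : comAlgType K) (d : A -> A) (c : K) (a b : A) :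
  opadd (opscale c (mulder d a)) (mulder d b) = mulder d (c *: a + b).
Proof.
apply: functional_extensionality => x.
by rewrite /opadd /opscale /mulder mulrDl scalerAl.
Qed.

Lemma PM (K : fieldType) (A : comAlgType K) (d : A -> A) :
  (forall a : A, a != 0 -> mulder d a <> (fun _ => 0)) ->
  forall chi a b, Phi d chi (mulder d a) (mulder d b) = chi (a * b).
Proof. by move=> H chi a b; rewrite /Phi !(@coefAd_mulder _ _ _ H). Qed.

Lemma chi0 (K : fieldType) (A : comAlgType K) (chi : A -> K) :
  lin_form chi -> chi 0 = 0.
Proof.
move=> Lc.
have h0 : chi (1 *: 0 + 0) = 1 * chi 0 + chi 0 := Lc 1 0 0.
rewrite scaler0 addr0 mul1r in h0.
have h1 : chi 0 + chi 0 - chi 0 = chi 0 - chi 0 by rewrite -h0.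
by rewrite addrK subrr in h1.
Qed.

Lemma Cadd (K : fieldType) (A : comAlgType K) (chi : A -> K) :
  lin_form chi -> forall u v, chi (u + v) = chi u + chi v.
Proof. by move=> Lc u v; rewrite -[u in LHS]scale1r Lc mul1r. Qed.

Lemma Zpart (K : fieldType) (A : comAlgType K) (d : A -> A) :
  (forall u v : A, d (u * v) = u * d v + d u * v) ->
  (forall a : A, a != 0 -> mulder d a <> (fun _ => 0)) ->
  forall chi : A -> K, lin_form chi -> Z2comm d (Phi d chi).
Proof.
move=> Hl H chi Lc.
split.
  by move=> x y [a ->] [b ->]; rewrite !(@PM _ _ _ H) mulrC.
split.
  move=> c x y z [a ->] [b ->] [e ->].
  by rewrite Elin !(@PM _ _ _ H) mulrDl -scalerAl Lc.
split.
  move=> c x y z [a ->] [b ->] [e ->].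
  by rewrite Elin !(@PM _ _ _ H) mulrDr -scalerAr Lc.
move=> x y z [a ->] [b ->] [e ->].
rewrite !(@Ebr _ _ _ Hl) !(@PM _ _ _ H) -!(@Cadd _ _ _ Lc) cyc.
exact: chi0.
Qed.

Theorem lemma2p4 (K : fieldType) (A : comAlgType K) (d : A -> A) :
  (2 \notin [pchar K])%N -> (3 \notin [pchar K])%N ->
  is_derivation d ->
  (forall a : A, a != 0 -> mulder d a <> (fun _ => 0)) ->
  (* Φ(χ) is given on generators by χ(ab) *)
  (forall chi : A -> K, forall a b : A,
      Phi d chi (mulder d a) (mulder d b) = chi (a * b)) /\
  (* each Φ(χ) lies in Z^2_comm(A∂) *)
  (forall chi : A -> K, lin_form chi -> Z2comm d (Phi d chi)) /\
  (* χ |-> Φ(χ) is linear *)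
  (forall (c : K) (chi1 chi2 : A -> K), lin_form chi1 -> lin_form chi2 ->
     forall x y, inAd d x -> inAd d y ->
       Phi d (fun u => c * chi1 u + chi2 u) x y = c * Phi d chi1 x y + Phi d chi2 x y) /\
  (* χ |-> Φ(χ) is injective *)
  (forall chi1 chi2 : A -> K, lin_form chi1 -> lin_form chi2 ->
     (forall x y, inAd d x -> inAd d y -> Phi d chi1 x y = Phi d chi2 x y) ->
     chi1 = chi2).
Proof.
move=> _ _ [_ Hl] H.
split; first exact: (@PM _ _ _ H).
split; first exact: (@Zpart _ _ _ Hl H).
split.
  by move=> c chi1 chi2 _ _ x y _ _; rewrite /Phi.
move=> chi1 chi2 _ _ E; apply: functional_extensionality => u.
have := E (mulder d u) (mulder d 1) (ex_intro _ u erefl) (ex_intro _ 1 erefl).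
by rewrite !(@PM _ _ _ H) mulr1.
Qed.
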